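(* Let $n\ge 1$ and let $x:\mathbb{N}\to\mathbb{R}$ satisfy $x(t+n)=a_1x(t+n-1)+\dots+a_nx(t)$ for all $t\in\mathbb{N}$, with $a_1,\dots,a_n\in\mathbb{R}$. Assume that $x$ satisfies no linear difference equation of order strictly less than $n$, i.e. there is no integer $m<n$ and no $c_1,\dots,c_m\in\mathbb{R}$ with $x(t+m)=c_1x(t+m-1)+\dots+c_mx(t)$ for all $t\in\mathbb{N}$. Let $X\in\mathbb{R}(z)$ be the rational function whose expansion at infinity is $\sum_{t\ge0}x(t)z^{-(t+1)}$, let $Q(z)=z^n-a_1z^{n-1}-\dots-a_n$, and let $P=QX$, which is a polynomial $P(z)=b_0z^{n-1}+b_1z^{n-2}+\dots+b_{n-1}$ with $b_0,\dots,b_{n-1}\in\mathbb{R}$. Then the parameters $a_1,\dots,a_n,b_0,\dots,b_{n-1}$ are linearly identifiable: the $(2n+1)\times(2n+1)$ Wronskian matrix $\mathcal{M}$ whose $\chi$-th row ($0\le\chi\le 2n$) is $$\Big(\tfrac{d^\chi}{dz^\chi}(z^nX),\ \tfrac{d^\chi}{dz^\chi}(z^{n-1}X),\ \dots,\ \tfrac{d^\chi}{dz^\chi}X,\ \tfrac{d^\chi}{dz^\chi}z^{n-1},\ \dots,\ \tfrac{d^\chi}{dz^\chi}z,\ \tfrac{d^\chi}{dz^\chi}1\Big)$$ has rank $2n$, and $(\alpha_1,\dots,\alpha_n,\beta_0,\dots,\beta_{n-1})=(a_1,\dots,a_n,b_0,\dots,b_{n-1})$ is the unique solution in $\mathbb{R}(z)^{2n}$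 of the linear system $$\frac{d^\chi}{dz^\chi}(z^nX)=\sum_{i=1}^n\alpha_i\frac{d^\chi}{dz^\chi}(z^{n-i}X)+\sum_{j=0}^{n-1}\beta_j\frac{d^\chi}{dz^\chi}z^{n-1-j},\qquad \chi=0,1,\dots,2n.$$
   Context: $\mathbb{R}(z)$ is the field of real rational functions, viewed as a differential field with derivation $d/dz$ (its field of constants is $\mathbb{R}$). The rational function $X$ exists because $x$ satisfies a linear recurrence. *)

(* Defs.v *)
From HB Require Import structures.
From mathcomp Require Import all_boot all_order all_algebra.
Set Implicit Arguments. Unset Strict Implicit. Unset Printing Implicit Defensive.
Import Order.TTheory GRing.Theory Num.Theory.
Local Open Scope ring_scope.

(* The field R(z) of real rational functions, over an abstract real field R
   (the statement is stated for every R : realFieldType; in particular for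
   the reals). *)
Notation ratfun R := {fraction {poly R}}.

Definition polyF (R : realFieldType) (p : {poly R}) : ratfun R :=
  @FracField.tofrac _ p.

Definition zF (R : realFieldType) : ratfun R := polyF 'X.

Definition derivF (R : realFieldType) (f : ratfun R) : ratfun R :=
  let r := repr f in
  polyF ((\n_r)^`() * \d_r - \n_r * (\d_r)^`()) / polyF (\d_r ^+ 2).

Definition derivFn (R : realFieldType) (k : nat) (f : ratfun R) : ratfun R :=
  iter k (@derivF R) f.

(* f has expansion sum_{t>=0} c(t) z^{-(t+1)} at infinity: for every N,
   f - sum_{t<N} c(t) z^{-(t+1)} = p/q with deg p - deg q <= -(N+1). *)
Definition expansion_at_infty (R : realFieldType) (f : ratfun R) (c : nat -> R) :=
  forall N : nat, exists p q : {poly R},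
    [/\ q != 0,
        f - \sum_(t < N) polyF (c t)%:P / zF R ^+ t.+1 = polyF p / polyF q
      & (size p + N < size q)%N].

Definition lin_rec (R : realFieldType) (m : nat) (c : 'I_m -> R) (x : nat -> R) :=
  forall t : nat, x (t + m)%N = \sum_(i < m) c i * x (t + m - 1 - i)%N.

(* Q(z) = z^n - a_1 z^{n-1} - ... - a_n   (a i stands for a_{i+1}) *)
Definition Qpoly (R : realFieldType) (n : nat) (a : 'I_n -> R) : {poly R} :=
  'X^n - \sum_(i < n) a i *: 'X^(n - 1 - i).

Definition Ppoly (R : realFieldType) (n : nat) (b : 'I_n -> R) : {poly R} :=
  \sum_(j < n) b j *: 'X^(n - 1 - j).

Definition wcol (R : realFieldType) (n : nat) (X : ratfun R) (k : nat) : ratfun R :=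
  if (k <= n)%N then zF R ^+ (n - k) * X else zF R ^+ (2 * n - k).

Definition wronskian (R : realFieldType) (n : nat) (X : ratfun R)
  : 'M[ratfun R]_((2 * n).+1) :=
  \matrix_(chi < (2 * n).+1, k < (2 * n).+1) derivFn chi (wcol n X k).

(* Main.v *)
Require Import Defs.
From HB Require Import structures.
From mathcomp Require Import all_boot all_order all_algebra.
From mathcomp Require Import ring zify.
Import Order.TTheory GRing.Theory Num.Theory.
Local Open Scope ring_scope.
Open Scope quotient_scope.

Section Frac.
Variable R : idomainType.
Lemma pi_frac (r : {ratio R}) :
  (\pi_({fraction R}) r) * FracField.tofrac (\d_r) = FracField.tofrac (\n_r).
Proof.
have dn := denom_ratioP r.
rewrite !piE.
apply/eqmodP; rewrite /= FracField.equivfE /FracField.mulf !numden_Ratio ?mulf_neq0 ?oner_eq0 //.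
by rewrite !mulr1 mulrC.
Qed.
Lemma frac_repr (f : {fraction R}) :
  f = FracField.tofrac (\n_(repr f)) / FracField.tofrac (\d_(repr f)).
Proof.
have dn := denom_ratioP (repr f).
rewrite -pi_frac reprK mulfK // tofrac_eq0 //.
Qed.
End Frac.
Arguments frac_repr {R}.
Arguments pi_frac {R}.

Lemma gen_add (K : fieldType) (a b c d : K) : a != 0 -> b != 0 ->
  c / a + d / b = (c * b + d * a) / (a * b).
Proof. move=> ha hb; field; by rewrite ha hb. Qed.
Lemma gen_mul (K : fieldType) (a b c d : K) : a != 0 -> b != 0 ->
  c / a * (d / b) = (c * d) / (a * b).
Proof. move=> ha hb; field; by rewrite ha hb. Qed.

Section Deriv.
Variable R : realFieldType.
Local Notation F := (ratfun R).

Lemma polyF_eq0 (p : {poly R}) : (polyF p == 0) = (p == 0).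
Proof. exact: tofrac_eq0. Qed.

Lemma polyF_inj (p q : {poly R}) : polyF p = polyF q -> p = q.
Proof. by move/eqP; rewrite /polyF tofrac_eq => /eqP. Qed.

Lemma ex_frac (f : F) : exists p q, q != 0 /\ f = polyF p / polyF q.
Proof.
exists (\n_(repr f)), (\d_(repr f)); split; first exact: denom_ratioP.
exact: frac_repr.
Qed.

Lemma derivF_frac (p q : {poly R}) : q != 0 ->
  derivF (polyF p / polyF q) = polyF (p^`() * q - p * q^`()) / polyF (q ^+ 2).
Proof.
move=> q0; rewrite /derivF.
set f := polyF p / polyF q.
have E := frac_repr f.
set n := \n_(repr f) in E *; set d := \d_(repr f) in E *.
have d0 : d != 0 by exact: denom_ratioP.
have E1 : p * d = n * q.
  apply: polyF_inj; apply/eqP; rewrite /polyF !rmorphM /= -eqr_div ?tofrac_eq0 //.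
  by apply/eqP; rewrite -E.
have E2 : p^`() * d + p * d^`() = n^`() * q + n * q^`().
  by rewrite -!derivM E1.
apply/eqP; rewrite eqr_div ?tofrac_eq0 ?expf_neq0 // /polyF -!rmorphM tofrac_eq.
apply/eqP; apply/subr0_eq.
have -> : (n^`() * d - n * d^`()) * q ^+ 2 - (p^`() * q - p * q^`()) * d ^+ 2
   = (d^`() * q + q^`() * d) * (p * d - n * q) + d * q * (n^`() * q + n * q^`() - (p^`() * d + p * d^`())) by ring.
by rewrite E1 E2 !subrr !mulr0 addr0.
Qed.

Lemma polyF1 : @polyF R 1 = 1.
Proof. exact: rmorph1. Qed.

Lemma derivF_poly (p : {poly R}) : derivF (polyF p) = polyF p^`().
Proof.
have E : polyF p = polyF p / polyF 1 by rewrite polyF1 divr1.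
have d1 : (1 : {poly R})^`() = 0 by rewrite -polyC1 derivC.
rewrite E derivF_frac ?oner_eq0 // d1 mulr1 mulr0 subr0 expr1n polyF1 !divr1.
reflexivity.
Qed.


Lemma tofrac_neq0 (q : {poly R}) : q != 0 -> FracField.tofrac q != 0.
Proof. by rewrite tofrac_eq0. Qed.


Lemma addF_frac (p1 q1 p2 q2 : {poly R}) : q1 != 0 -> q2 != 0 ->
  polyF p1 / polyF q1 + polyF p2 / polyF q2 = polyF (p1 * q2 + p2 * q1) / polyF (q1 * q2).
Proof.
move=> h1 h2; rewrite /polyF rmorphD !rmorphM /=.
exact: gen_add (tofrac_neq0 q1 h1) (tofrac_neq0 q2 h2).
Qed.

Lemma mulF_frac (p1 q1 p2 q2 : {poly R}) : q1 != 0 -> q2 != 0 ->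
  polyF p1 / polyF q1 * (polyF p2 / polyF q2) = polyF (p1 * p2) / polyF (q1 * q2).
Proof.
move=> h1 h2; rewrite /polyF !rmorphM /=.
exact: gen_mul (tofrac_neq0 q1 h1) (tofrac_neq0 q2 h2).
Qed.

Lemma eq_frac (p q r s : {poly R}) : q != 0 -> s != 0 -> p * s = r * q ->
  polyF p / polyF q = polyF r / polyF s.
Proof.
move=> hq hs E; apply/eqP; rewrite eqr_div ?tofrac_neq0 //.
by rewrite /polyF -!rmorphM /= E.
Qed.

Lemma derivF_add (f g : F) : derivF (f + g) = derivF f + derivF g.
Proof.
have [p1 [q1 [h1 ->]]] := ex_frac f.
have [p2 [q2 [h2 ->]]] := ex_frac g.
have h12 := mulf_neq0 h1 h2.
have s1 : q1 ^+ 2 != 0 by rewrite expf_neq0.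
have s2 : q2 ^+ 2 != 0 by rewrite expf_neq0.
have s12 : (q1 * q2) ^+ 2 != 0 by rewrite expf_neq0.
rewrite (addF_frac _ _ _ _ h1 h2) (derivF_frac _ _ h12) (derivF_frac _ _ h1) (derivF_frac _ _ h2).
rewrite (addF_frac _ _ _ _ s1 s2).
apply: (eq_frac _ _ _ _ s12 (mulf_neq0 s1 s2)).
rewrite !(derivD, derivM); ring.
Qed.

Lemma derivF_mul (f g : F) : derivF (f * g) = derivF f * g + f * derivF g.
Proof.
have [p1 [q1 [h1 ->]]] := ex_frac f.
have [p2 [q2 [h2 ->]]] := ex_frac g.
have h12 := mulf_neq0 h1 h2.
have s1 : q1 ^+ 2 != 0 by rewrite expf_neq0.
have s2 : q2 ^+ 2 != 0 by rewrite expf_neq0.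
have s12 : (q1 * q2) ^+ 2 != 0 by rewrite expf_neq0.
rewrite (mulF_frac _ _ _ _ h1 h2) (derivF_frac _ _ h12) (derivF_frac _ _ h1) (derivF_frac _ _ h2).
rewrite (mulF_frac _ _ _ _ s1 h2) (mulF_frac _ _ _ _ h1 s2).
rewrite (addF_frac _ _ _ _ (mulf_neq0 s1 h2) (mulf_neq0 h1 s2)).
apply: (eq_frac _ _ _ _ s12 (mulf_neq0 (mulf_neq0 s1 h2) (mulf_neq0 h1 s2))).
rewrite !(derivD, derivM); ring.
Qed.

Lemma deriv0_const (p : {poly R}) : p^`() = 0 -> p = (p`_0)%:P.
Proof.
move=> H; apply/polyP => i; rewrite coefC; case: i => [|i] //=.
have := congr1 (fun r : {poly R} => r`_i) H; rewrite coef_deriv coef0 => /eqP.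
by rewrite mulrn_eq0 /= => /eqP.
Qed.

Lemma const_ratio (p q : {poly R}) : q != 0 -> p^`() * q = p * q^`() ->
  exists c : R, p = c *: q.
Proof.
move=> q0 E.
set g := gcdp p q.
have g0 : g != 0 by rewrite gcdp_eq0 negb_and q0 orbT.
have cop := coprimep_div_gcd (p:=p) (q:=q) (introT orP (or_intror q0)).
set p1 := p %/ g in cop; set q1 := q %/ g in cop.
have Ep : p = p1 * g by rewrite divpK // dvdp_gcdl.
have Eq : q = q1 * g by rewrite divpK // dvdp_gcdr.
have q10 : q1 != 0 by apply: contraNneq q0 => h; rewrite Eq h mul0r.
have E1 : p1^`() * q1 = p1 * q1^`().
  apply/eqP; rewrite -subr_eq0; apply/eqP.
  have : g ^+ 2 * (p1^`() * q1 - p1 * q1^`()) = 0.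
    have E' : p^`() * q - p * q^`() = 0 by rewrite E subrr.
    rewrite -E' Ep Eq !derivM; ring.
  by move/eqP; rewrite mulf_eq0 expf_eq0 (negbTE g0) andbF /= => /eqP.
have dq1 : q1^`() = 0.
  apply/eqP; apply: contraT => h.
  have : (q1 %| q1^`()).
    have cop' : coprimep q1 p1 by rewrite coprimep_sym.
    by rewrite -(Gauss_dvdpr _ cop') -E1 dvdp_mull // dvdpp.
  move/(dvdp_leq h); rewrite leqNgt lt_size_deriv //.
rewrite dq1 mulr0 in E1; move/eqP: E1; rewrite mulf_eq0 (negbTE q10) orbF => /eqP dp1.
have Hq1 := deriv0_const _ dq1.
have Hp1 := deriv0_const _ dp1.
have c0 : q1`_0 != 0 by apply: contraNneq q10 => h; rewrite Hq1 h.
exists (p1`_0 / q1`_0).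
move: c0 Hp1 Hq1; set a1 := p1`_0; set b1 := q1`_0 => c0 Hp1 Hq1.
rewrite Ep Eq Hp1 Hq1 -mul_polyC mulrA -polyCM mulfVK //.
Qed.

Lemma derivF_eq0 (f : F) : derivF f = 0 -> exists c : R, f = polyF c%:P.
Proof.
have [p [q [q0 ->]]] := ex_frac f.
rewrite (derivF_frac _ _ q0) => /eqP; rewrite mulf_eq0 invr_eq0 !polyF_eq0 expf_eq0 (negbTE q0) andbF orbF.
rewrite subr_eq0 => /eqP /(const_ratio _ _ q0) [c ->].
exists c; rewrite -mul_polyC /polyF rmorphM /= mulfK //; exact: tofrac_neq0.
Qed.

Lemma derivF_polyC (c : R) : derivF (polyF c%:P) = 0.
Proof. by rewrite derivF_poly derivC /polyF rmorph0. Qed.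

Lemma derivFn_add k (f g : F) : derivFn k (f + g) = derivFn k f + derivFn k g.
Proof. by elim: k => // k IH; rewrite /derivFn /= -!/(derivFn k _) IH derivF_add. Qed.

Lemma derivFn_polyC k (c : R) (f : F) : derivFn k (polyF c%:P * f) = polyF c%:P * derivFn k f.
Proof. by elim: k => // k IH; rewrite /derivFn /= -!/(derivFn k _) IH derivF_mul derivF_polyC mul0r add0r. Qed.

Lemma derivFn0 k : derivFn k (0 : F) = 0.
Proof.
elim: k => // k IH; rewrite /derivFn /= -!/(derivFn k _) IH.
have -> : (0 : F) = polyF 0%:P by rewrite /polyF rmorph0.
exact: derivF_polyC.
Qed.

Lemma derivFn_sum k m (c : nat -> R) (g : nat -> F) :
  derivFn k (\sum_(i < m) polyF (c i)%:P * g i) = \sum_(i < m) polyF (c i)%:P * derivFn k (g i).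
Proof.
elim: m => [|m IH]; first by rewrite !big_ord0 derivFn0.
by rewrite !big_ord_recr /= derivFn_add IH derivFn_polyC.
Qed.

Definition const_of (f : F) : R := lead_coef (\n_(repr f)) / lead_coef (\d_(repr f)).

Lemma derivF_eq0' (f : F) : derivF f = 0 -> f = polyF (const_of f)%:P.
Proof.
have E := frac_repr f.
rewrite /const_of.
move: (denom_ratioP (repr f)) E.
set p := \n_(repr f); set q := \d_(repr f) => q0 E.
rewrite {1}E (derivF_frac p q q0) => /eqP.
rewrite mulf_eq0 invr_eq0 !polyF_eq0 expf_eq0 (negbTE q0) andbF orbF.
rewrite subr_eq0 => /eqP /(const_ratio _ _ q0) [c pE].
rewrite E pE lead_coefZ mulfK ?lead_coef_eq0 //.
rewrite -mul_polyC /polyF rmorphM /= mulfK //; exact: tofrac_neq0.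
Qed.

Lemma polyF1' : polyF (1%:P : {poly R}) = 1.
Proof. by rewrite polyC1 polyF1. Qed.

Lemma derivF1 : derivF (1 : F) = 0.
Proof. by rewrite -polyF1' derivF_polyC. Qed.

Lemma derivF0 : derivF (0 : F) = 0.
Proof. have := derivFn0 1; exact. Qed.

Lemma derivF_sum m (f : 'I_m -> F) : derivF (\sum_(k < m) f k) = \sum_(k < m) derivF (f k).
Proof.
elim: m f => [|m IH] f; first by rewrite !big_ord0 derivF0.
by rewrite !big_ord_recr /= derivF_add IH.
Qed.

Definition Rindep m (g : nat -> F) :=
  forall r : nat -> R, \sum_(k < m) polyF (r k)%:P * g k = 0 -> forall k, (k < m)%N -> r k = 0.

Lemma Rindep_pred m g : Rindep m.+1 g -> Rindep m g.
Proof.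
move=> H r Hr k km.
have := H (fun i => if (i < m)%N then r i else 0) _ k (ltnW km).
rewrite km; apply.
rewrite big_ord_recr /= ltnn polyC0 /polyF rmorph0 mul0r addr0 -[RHS]Hr.
by apply: eq_bigr => i _; rewrite ltn_ord.
Qed.

Lemma indep m (g : nat -> F) : Rindep m g ->
  forall c : nat -> F, (forall chi, (chi < m)%N -> \sum_(k < m) c k * derivFn chi (g k) = 0) ->
  forall k, (k < m)%N -> c k = 0.
Proof.
elim: m => [|m IH] Hind c Hc k km; first by [].
have Hind' := Rindep_pred _ _ Hind.
have [cm0|cmn0] := eqVneq (c m) 0.
  have Hc' : forall chi, (chi < m)%N -> \sum_(k < m) c k * derivFn chi (g k) = 0.
    move=> chi lt; have := Hc chi (ltnW lt); rewrite big_ord_recr /= cm0 mul0r addr0.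
    exact.
  rewrite ltnS leq_eqVlt in km; case/orP: km => [/eqP -> // | km].
  exact: (IH Hind' c Hc' k km).
exfalso.
pose d := fun k => c k / c m.
have Hd : forall chi, (chi < m.+1)%N -> \sum_(k < m.+1) d k * derivFn chi (g k) = 0.
  move=> chi lt; rewrite /d.
  under eq_bigr do rewrite mulrAC.
  by rewrite -mulr_suml Hc // mul0r.
pose e := fun k => derivF (d k).
have He : forall chi, (chi < m)%N -> \sum_(k < m) e k * derivFn chi (g k) = 0.
  move=> chi lt.
  have h1 := Hd chi (ltnW lt).
  have h2 : \sum_(k < m.+1) d k * derivF (derivFn chi (g k)) = 0 := Hd chi.+1 lt.
  have : derivF (\sum_(k < m.+1) d k * derivFn chi (g k)) = 0 by rewrite h1 derivF0.
  rewrite derivF_sum.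
  under eq_bigr do rewrite derivF_mul.
  rewrite big_split /= h2 addr0 big_ord_recr /=.
  by rewrite /e /d divff // derivF1 mul0r addr0.
have e0 := IH Hind' e He.
pose r := fun k => if (k < m)%N then const_of (d k) else 1.
have : \sum_(k < m.+1) polyF (r k)%:P * g k = 0.
  rewrite -[RHS](Hd 0%N (ltn0Sn _)) /derivFn /=.
  rewrite !big_ord_recr /=; congr (_ + _).
    apply: eq_bigr => i _; rewrite /r ltn_ord; congr (_ * _).
    by rewrite -(derivF_eq0' (d i) (e0 i (ltn_ord i))).
  by rewrite /r ltnn polyF1' /d divff.
move/Hind => /(_ m (ltnSn m)); rewrite /r ltnn => /eqP; rewrite oner_eq0.
done.
Qed.
End Deriv.

Lemma gen_ser (K : fieldType) (Z U S P Q : K) : Q != 0 ->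
  (Z * (U * (S + P / Q)) - U * (S * Z)) * Q = U * Z * P.
Proof. move=> hQ; field; by rewrite hQ. Qed.

Section Series.
Variable R : realFieldType.
Local Notation F := (ratfun R).

Lemma polyFM (p q : {poly R}) : polyF (p * q) = polyF p * polyF q.
Proof. exact: rmorphM. Qed.
Lemma polyFD (p q : {poly R}) : polyF (p + q) = polyF p + polyF q.
Proof. exact: rmorphD. Qed.
Lemma polyFB (p q : {poly R}) : polyF (p - q) = polyF p - polyF q.
Proof. exact: rmorphB. Qed.
Lemma polyFN (p : {poly R}) : polyF (- p) = - polyF p.
Proof. exact: rmorphN. Qed.
Lemma polyF_sum n (f : 'I_n -> {poly R}) : polyF (\sum_(i < n) f i) = \sum_(i < n) polyF (f i).
Proof. exact: rmorph_sum. Qed.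
Lemma polyFZ (c : R) (p : {poly R}) : polyF (c *: p) = polyF c%:P * polyF p.
Proof. by rewrite -mul_polyC polyFM. Qed.

Lemma zF_pow k : zF R ^+ k = polyF 'X^k.
Proof. by rewrite /zF /polyF rmorphXn. Qed.

Lemma zF_neq0 : zF R != 0.
Proof. by rewrite /zF polyF_eq0 polyX_eq0. Qed.

Lemma sumS N (x : nat -> R) :
  (\sum_(t < N) polyF (x t)%:P / zF R ^+ t.+1) * zF R ^+ N
  = polyF (\sum_(t < N) x t *: 'X^(N - 1 - t)).
Proof.
rewrite mulr_suml polyF_sum; apply: eq_bigr => t _ /=.
have -> : zF R ^+ N = zF R ^+ (N - 1 - t) * zF R ^+ t.+1.
  by rewrite -exprD; congr (_ ^+ _); have := ltn_ord t; lia.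
rewrite [X in _ * X]mulrC mulrA (divfK (expf_neq0 _ zF_neq0)).
by rewrite polyFZ -zF_pow.
Qed.

Lemma coef_revsum n (r : nat -> R) k : (k < n)%N ->
  (\sum_(i < n) r i *: ('X^(n - 1 - i) : {poly R}))`_(n - 1 - k) = r k.
Proof.
move=> kn; rewrite coef_sum (bigD1 (Ordinal kn)) //= coefZ coefXn eqxx mulr1.
rewrite big1 ?addr0 // => i ne; rewrite coefZ coefXn.
case: eqP => [h|_]; last by rewrite mulr0.
exfalso; move/eqP: ne; apply; apply: val_inj => /=.
have := ltn_ord i; lia.
Qed.

Lemma rec_coef (X : F) (x : nat -> R) (u w : {poly R}) :
  expansion_at_infty X x -> u != 0 -> polyF u * X = polyF w ->
  forall t, \sum_(j < size u) u`_j * x (t + j)%N = 0.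
Proof.
move=> Hexp u0 Huw t.
set m := (size u).-1.
have sm : size u = m.+1 by rewrite /m prednK // size_poly_gt0.
pose N := (t + m).+1.
have [p [q [q0 Eq Hs]]] := Hexp N.
set s := \sum_(t' < N) x t' *: ('X^(N - 1 - t') : {poly R}).
pose A := 'X^N * w - u * s.
have EA : A * q = u * 'X^N * p.
  apply: polyF_inj.
  have E2 : X = (\sum_(t0 < N) polyF (x t0)%:P / zF R ^+ t0.+1) + polyF p / polyF q.
    by rewrite -Eq addrC subrK.
  rewrite /A !polyFM polyFB !polyFM -Huw -sumS -zF_pow E2.
  exact: gen_ser (tofrac_neq0 _ _ q0).
have Am : A`_m = 0.
  case: (eqVneq A 0) => [->|A0]; first by rewrite coef0.
  case: (eqVneq p 0) => [p0|p0].
    by move: EA; rewrite p0 mulr0 => /eqP; rewrite mulf_eq0 (negbTE A0) (negbTE q0).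
  have h1 : size (A * q) = size (u * 'X^N * p) by rewrite EA.
  rewrite size_mul // in h1.
  have h2 : (size (u * 'X^N * p)%R <= (size (u * 'X^N)%R + size p).-1)%N := size_polyMleq _ _.
  have h3 : (size (u * 'X^N)%R <= (size u + N.+1).-1)%N.
    by rewrite -(size_polyXn R N); exact: size_polyMleq.
  have hA : (size A <= m)%N.
  move: h1 h2 h3 Hs sm; clear; move: (size A) (size q) (size p) (size u) (size (u * 'X^N)%R) (size (u * 'X^N * p)%R) => a b c d e f.
  lia.
  exact: nth_default.
move: Am; rewrite /A coefB coefXnM.
have -> : (m < N)%N by rewrite /N; lia.
rewrite sub0r coefM => /eqP; rewrite oppr_eq0 => /eqP H; rewrite -[RHS]H.
rewrite sm; apply: eq_bigr => j _; congr (_ * _).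
have -> : (m - j = N - 1 - (t + j))%N by have := ltn_ord j; rewrite /N; lia.
rewrite coef_revsum //; have := ltn_ord j; rewrite /N; lia.
Qed.

Lemma no_small (X : F) (x : nat -> R) (u w : {poly R}) (n : nat) :
  expansion_at_infty X x ->
  (forall (m : nat) (c : 'I_m -> R), (m < n)%N -> ~ lin_rec c x) ->
  u != 0 -> (size u <= n)%N -> polyF u * X = polyF w -> False.
Proof.
move=> Hexp Hmin u0 su Huw.
pose m := (size u).-1.
have sm : size u = m.+1 by rewrite /m prednK // size_poly_gt0.
have L0 : u`_m != 0 by have := u0; rewrite -lead_coef_eq0 lead_coefE.
pose c := fun i : 'I_m => - u`_(m - 1 - i) / u`_m.
apply: (Hmin m c); first by rewrite /m; lia.
move=> t.
have H := rec_coef _ _ _ _ Hexp u0 Huw t.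
rewrite sm big_ord_recr /= in H.
rewrite (reindex_inj rev_ord_inj) /=.
have -> : \sum_(i < m) c (rev_ord i) * x (t + m - 1 - rev_ord i)%N
    = - (\sum_(i < m) u`_i * x (t + i)%N) / u`_m.
  rewrite mulNr mulr_suml -sumrN; apply: eq_bigr => i _; rewrite /c /=.
  have e1 : (m - 1 - (m - i.+1) = i)%N by have := ltn_ord i; lia.
  have e2 : (t + m - 1 - (m - i.+1) = t + i)%N by have := ltn_ord i; lia.
  by rewrite e1 e2 !mulNr mulrAC.
move/eqP: H; rewrite addr_eq0 => /eqP ->.
by rewrite opprK mulrC mulKf.
Qed.

Lemma size_revsum n (r : nat -> R) :
  (size (\sum_(i < n) r i *: ('X^(n - 1 - i) : {poly R}))%R <= n)%N.
Proof.
apply: (big_ind (fun p : {poly R} => (size p <= n)%N)).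
- by rewrite size_poly0.
- move=> p q hp hq; apply: leq_trans (size_polyD p q) _; by rewrite geq_max hp hq.
- move=> i _; apply: leq_trans (size_scale_leq _ _) _; rewrite size_polyXn.
  have := ltn_ord i; lia.
Qed.

Lemma sum_split2 (f : nat -> F) n :
  \sum_(k < 2 * n) f k = \sum_(k < n) f k + \sum_(k < n) f (n + k)%N.
Proof. by rewrite mul2n -addnn big_split_ord. Qed.

Lemma polyF_revsum n (r : nat -> R) :
  polyF (\sum_(i < n) r i *: ('X^(n - 1 - i) : {poly R}))
  = \sum_(i < n) polyF (r i)%:P * zF R ^+ (n - 1 - i).
Proof. by rewrite polyF_sum; apply: eq_bigr => i _; rewrite polyFZ zF_pow. Qed.

Lemma wcol_lo n X (k : nat) : (k < n)%N -> wcol n X k.+1 = zF R ^+ (n - 1 - k) * X.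
Proof. by move=> kn; rewrite /wcol kn; congr (_ ^+ _ * _); lia. Qed.

Lemma wcol_hi n X (k : nat) : (k < n)%N -> wcol n X (n + k).+1 = zF R ^+ (n - 1 - k).
Proof.
move=> kn; rewrite /wcol.
have -> : ((n + k).+1 <= n)%N = false by lia.
congr (_ ^+ _); lia.
Qed.

Lemma wcol_indep n (X : F) (x : nat -> R) :
  expansion_at_infty X x ->
  (forall (m : nat) (c : 'I_m -> R), (m < n)%N -> ~ lin_rec c x) ->
  Rindep R (2 * n) (fun k => wcol n X k.+1).
Proof.
move=> Hexp Hmin r Hr.
rewrite /= (sum_split2 (fun k => polyF (r k)%:P * wcol n X k.+1)) /= in Hr.
pose u := \sum_(i < n) r i *: ('X^(n - 1 - i) : {poly R}).
pose v := \sum_(i < n) r (n + i)%N *: ('X^(n - 1 - i) : {poly R}).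
have E : polyF u * X = polyF (- v).
  apply/eqP; rewrite polyFN -addr_eq0; apply/eqP; rewrite -[RHS]Hr.
  rewrite !polyF_revsum mulr_suml; congr (_ + _).
    under [RHS]eq_bigr => i _ do rewrite (wcol_lo _ _ _ (ltn_ord i)) mulrA.
    reflexivity.
  under [RHS]eq_bigr => i _ do rewrite (wcol_hi _ _ _ (ltn_ord i)).
  by rewrite /v (polyF_revsum n (fun i => r (n + i)%N)).
have u0 : u = 0.
  apply/eqP; apply: contraT => u0.
  by case: (no_small _ _ _ _ _ Hexp Hmin u0 (size_revsum n r) E).
have v0 : v = 0.
  by apply: polyF_inj; move: E; rewrite u0 /polyF rmorph0 mul0r rmorphN => /eqP; rewrite eq_sym oppr_eq0 => /eqP.
move=> k k2n.
case: (ltnP k n) => kn.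
  by rewrite -(coef_revsum _ r _ kn) -/u u0 coef0.
have kk : k = (n + (k - n))%N by lia.
have kn' : (k - n < n)%N by lia.
by rewrite kk -(coef_revsum _ (fun i => r (n + i)%N) _ kn') -/v v0 coef0.
Qed.
End Series.

Definition ext (T : Type) (d : T) n (f : 'I_n -> T) (k : nat) : T :=
  if insub k is Some i then f i else d.

Arguments ext {T} d {n} f k.

Lemma ext_ord (T : Type) (d : T) n (f : 'I_n -> T) (i : 'I_n) : ext d f i = f i.
Proof. by rewrite /ext valK. Qed.

Section Main.
Variable R : realFieldType.
Local Notation F := (ratfun R).

Lemma derivFn_sumO k m (c : 'I_m -> R) (g : 'I_m -> F) :
  derivFn k (\sum_(i < m) polyF (c i)%:P * g i) = \sum_(i < m) polyF (c i)%:P * derivFn k (g i).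
Proof.
elim: m c g => [|m IH] c g; first by rewrite !big_ord0 derivFn0.
by rewrite !big_ord_recr /= derivFn_add IH derivFn_polyC.
Qed.

Lemma Dchi n (a b : 'I_n -> R) (X : F) :
  polyF (Qpoly a) * X = polyF (Ppoly b) -> forall chi,
  derivFn chi (zF R ^+ n * X) =
    \sum_(i < n) polyF (a i)%:P * derivFn chi (zF R ^+ (n - 1 - i) * X)
  + \sum_(j < n) polyF (b j)%:P * derivFn chi (zF R ^+ (n - 1 - j)).
Proof.
move=> hQP chi.
have E : zF R ^+ n * X = \sum_(i < n) polyF (a i)%:P * (zF R ^+ (n - 1 - i) * X)
  + \sum_(j < n) polyF (b j)%:P * zF R ^+ (n - 1 - j).
  move: hQP; rewrite /Qpoly /Ppoly polyFB !polyF_sum zF_pow.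
  under eq_bigr => i _ do rewrite polyFZ -zF_pow.
  under [in X in _ = X -> _]eq_bigr => i _ do rewrite polyFZ -zF_pow.
  rewrite mulrBl => /eqP; rewrite subr_eq => /eqP ->.
  rewrite addrC mulr_suml; congr (_ + _); apply: eq_bigr => i _; by rewrite mulrA.
by rewrite E derivFn_add !derivFn_sumO.
Qed.

Definition extF {n} (ca cb : 'I_n -> F) (k : nat) : F :=
  if (k < n)%N then ext 0 ca k else ext 0 cb (k - n).

Lemma combo n (X : F) (ca cb : 'I_n -> F) chi :
  \sum_(k < 2 * n) extF ca cb k * derivFn chi (wcol n X k.+1)
  = \sum_(i < n) ca i * derivFn chi (zF R ^+ (n - 1 - i) * X)
  + \sum_(j < n) cb j * derivFn chi (zF R ^+ (n - 1 - j)).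
Proof.
rewrite (sum_split2 _ (fun k => extF ca cb k * derivFn chi (wcol n X k.+1))).
congr (_ + _); apply: eq_bigr => i _.
  by rewrite /extF ltn_ord ext_ord (wcol_lo _ _ _ _ (ltn_ord i)).
rewrite /extF.
have -> : ((n + i) < n)%N = false by lia.
by rewrite addKn ext_ord (wcol_hi _ _ _ _ (ltn_ord i)).
Qed.
End Main.
Arguments extF {R n}.

Theorem theorem1 (R : realFieldType) (n : nat) (x : nat -> R)
    (a b : 'I_n -> R) (X : ratfun R) :
  (1 <= n)%N ->
  lin_rec a x ->
  (forall (m : nat) (c : 'I_m -> R), (m < n)%N -> ~ lin_rec c x) ->
  expansion_at_infty X x ->
  polyF (Qpoly a) * X = polyF (Ppoly b) ->
  \rank (wronskian n X) = (2 * n)%N /\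
  (forall alpha beta : 'I_n -> ratfun R,
     (forall chi : nat, (chi <= 2 * n)%N ->
        derivFn chi (zF R ^+ n * X) =
          \sum_(i < n) alpha i * derivFn chi (zF R ^+ (n - 1 - i) * X)
        + \sum_(j < n) beta j * derivFn chi (zF R ^+ (n - 1 - j)))
     <-> (forall i : 'I_n, alpha i = polyF (a i)%:P /\ beta i = polyF (b i)%:P)).
Proof.
move=> n1 _ Hmin Hexp hQP.
have HD := Dchi R n a b X hQP.
have Hind := wcol_indep R n X x Hexp Hmin.
pose A := fun i : 'I_n => polyF (R:=R) (a i)%:P.
pose B := fun i : 'I_n => polyF (R:=R) (b i)%:P.
split; last first.
  move=> alpha beta; split.
    move=> H.
    pose ca := fun i => alpha i - A i.
    pose cb := fun i => beta i - B i.
    have H0 : forall chi, (chi < 2 * n)%N ->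
        \sum_(k < 2 * n) extF ca cb k * derivFn chi (wcol n X k.+1) = 0.
      move=> chi lt; rewrite combo /ca /cb.
      under eq_bigr do rewrite mulrBl.
      under [X in _ + X = _]eq_bigr do rewrite mulrBl.
      rewrite !sumrB /A /B.
      have := H chi (ltnW lt); rewrite HD => E.
      by rewrite addrACA -opprD -E subrr.
    have Hc := indep R (2 * n) _ Hind _ H0.
    move=> i; split.
      have := Hc i (leq_trans (ltn_ord i) (leq_pmull _ (isT : (0 < 2)%N))).
      rewrite /extF ltn_ord ext_ord /ca => /eqP; rewrite subr_eq0 => /eqP //.
    have := Hc (n + i)%N ltac:(have := ltn_ord i; lia).
    rewrite /extF.
    have -> : ((n + i) < n)%N = false by lia.
    rewrite addKn ext_ord /cb => /eqP; rewrite subr_eq0 => /eqP //.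
  move=> H chi _; rewrite HD; congr (_ + _); apply: eq_bigr => i _.
    by rewrite (proj1 (H i)).
  by rewrite (proj2 (H i)).
set W := wronskian n X.
apply/eqP; rewrite eqn_leq; apply/andP; split.
  pose v := \row_(k < (2 * n).+1) (if (nat_of_ord k == 0)%N then -1 else extF A B k.-1).
  have vW : v *m W^T = 0.
    apply/matrixP => i j; rewrite !mxE big_ord_recl /= !mxE /=.
    under eq_bigr => k _ do rewrite !mxE lift0 /=.
    rewrite combo /wcol /= subn0 -HD.
    by rewrite mulN1r addNr.
  have v0 : v != 0.
    apply/eqP => /matrixP /(_ ord0 ord0); rewrite !mxE /= => /eqP.
    by rewrite oppr_eq0 oner_eq0.
  have : (v <= kermx W^T)%MS by rewrite sub_kermx vW.
  move/mxrankS; rewrite rank_rV v0 mxrank_ker mxrank_tr /=.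
  have := rank_leq_col W; lia.
pose K := rowsub (lift ord0) W^T.
have K0 : kermx K = 0.
  apply/row_matrixP => i; rewrite row0.
  have hK : row i (kermx K) *m K = 0 by rewrite -row_mul mulmx_ker row0.
  pose c := ext 0 (fun k : 'I_(2 * n) => row i (kermx K) 0 k).
  have Hc : forall chi, (chi < 2 * n)%N ->
      \sum_(k < 2 * n) c k * derivFn chi (wcol n X k.+1) = 0.
    move=> chi lt.
    have := congr1 (fun M : 'M_(1, (2 * n).+1) => M 0 (inord chi)) hK.
    rewrite !mxE /= => H1; rewrite -[RHS]H1.
    apply: eq_bigr => k _; rewrite /c ext_ord !mxE lift0 inordK //; lia.
  apply/rowP => k; rewrite [RHS]mxE.
  have := indep R (2 * n) _ Hind c Hc k (ltn_ord k).
  by rewrite /c ext_ord.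
have rK : \rank K = (2 * n)%N.
  have := mxrank_ker K; rewrite K0 mxrank0.
  have := rank_leq_row K; lia.
apply: (@leq_trans (\rank K)); first by rewrite rK.
rewrite -(mxrank_tr W).
exact: mxrankS (rowsub_sub _ _).
Qed.
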